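(* Let $\mathcal G=(\mathcal V,\mathcal E,W)$ be a network, $h\in\mathbb{R}^{\mathcal V}$, and consider the SNC game with binary actions on $\mathcal G$ with external field $h$, with set of Nash equilibria $\mathcal N$. Let $\mathcal V=\mathcal R\cup\mathcal S$, $\mathcal R\cap\mathcal S=\emptyset$, be a binary partition such that $\mathcal G_{\mathcal R}$ is structurally balanced and $\mathcal G_{\mathcal S}$ is undirected. If there exists $\tau\in\{\pm1\}^{\mathcal R}$ such that $\tau_iW_{ij}\tau_j\ge0$ for all $i,j\in\mathcal R$ and $w_i^{\mathcal R}+\tau_ih_i\ge w_i^{\mathcal S}$ for all $i\in\mathcal R$, then there exists a Nash equilibrium $x^*\in\mathcal N$ with $x^*_{\mathcal R}=\tau$.
   Context: A network is a triple $\mathcal G=(\mathcal V,\mathcal E,W)$ where $\mathcal V$ is a finite nonempty set, $\mathcal E\subseteq\mathcal V\times\mathcal V$, and $W\in\mathbb{R}^{\mathcal V\times\mathcal V}$ has zero diagonal and satisfies $W_{ij}\neq0$ iff $(i,j)\in\mathcal E$ (weights may have either sign). It is undirected if its weight matrix is symmetric. For $\mathcal U\subseteq\mathcal V$, the subnetwork $\mathcal G_{\mathcal U}$ has node set $\mathcal U$, links $\mathcal E\cap(\mathcal U\times\mathcal U)$ and weight matrix $W_{\mathcal U\mathcal U}$. A network is structurally balanced if its node set can be written as a disjoint union of two sets with nonnegative weights on links within each set and nonpositive weights on links between the two sets. For $i\in\mathcal V$ and $\mathcal B\subseteq\mathcal V$, $w_i^{\mathcal B}=\sum_{j\in\mathcal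 B}|W_{ij}|$. The SNC game with binary actions on $\mathcal G$ with external field $h\in\mathbb{R}^{\mathcal V}$ has player set $\mathcal V$, action set $\{-1,+1\}$ for each player, strategy profiles $\mathcal X=\{\pm1\}^{\mathcal V}$, and utilities $u_i(x)=h_ix_i+x_i\sum_{j\in\mathcal V}W_{ij}x_j$. A Nash equilibrium is $x^*$ with $x^*_i\in\arg\max_{a\in\{\pm1\}}u_i(a,x^*_{-i})$ for all $i$. *)

(* Defs.v *)
From mathcomp Require Import all_boot all_order all_algebra.
Set Implicit Arguments. Unset Strict Implicit. Unset Printing Implicit Defensive.
Import Order.TTheory GRing.Theory Num.Theory.
Local Open Scope ring_scope.

Section Network.
Variables (R : realFieldType) (V : finType).

(* A network on the node set V is given by its weight matrix W; the link set
   is E = {(i,j) | W i j != 0}, so it is determined by W. *)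
Definition zero_diag (W : V -> V -> R) : Prop := forall i, W i i = 0.

Definition undirected_on (W : V -> V -> R) (U : {set V}) : Prop :=
  forall i j, i \in U -> j \in U -> W i j = W j i.

Definition struct_balanced_on (W : V -> V -> R) (U : {set V}) : Prop :=
  exists A : {set V}, forall i j, i \in U -> j \in U ->
    if (i \in A) == (j \in A) then 0 <= W i j else W i j <= 0.

Definition wdeg (W : V -> V -> R) (i : V) (B : {set V}) : R :=
  \sum_(j in B) `|W i j|.

Definition pm1 (a : R) : Prop := a = 1 \/ a = -1.

Definition profile (x : V -> R) : Prop := forall i, pm1 (x i).

Definition utility (W : V -> V -> R) (h : V -> R) (i : V) (x : V -> R) : R :=
  h i * x i + x i * \sum_(j : V) W i j * x j.

Definition deviate (x : V -> R) (i : V) (a : R) : V -> R :=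
  fun j => if j == i then a else x j.

Definition nash (W : V -> V -> R) (h : V -> R) (x : V -> R) : Prop :=
  profile x /\
  forall i a, pm1 a -> utility W h i (deviate x i a) <= utility W h i x.

End Network.

(* Main.v *)
Require Import Defs.
From mathcomp Require Import all_boot all_order all_algebra.
From mathcomp Require Import ring lra.
Import Order.TTheory GRing.Theory Num.Theory.
Local Open Scope ring_scope.

Lemma dev_ok {R : realFieldType} {V : finType} (W : V -> V -> R) (h : V -> R)
  {x : V -> R} {i : V} :
  W i i = 0 -> pm1 (x i) -> 0 <= x i * (h i + \sum_j W i j * x j) ->
  forall a, pm1 a -> utility W h i (deviate x i a) <= utility W h i x.
Proof.
move=> Wii xi H a ha; rewrite /utility /deviate eqxx.
have -> : \sum_j W i j * (if j == i then a else x j) = \sum_j W i j * x j.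
  apply: eq_bigr => j _; case: eqP => [->|//]; by rewrite Wii !mul0r.
move: H; set C := \sum_j W i j * x j.
by case: xi => ->; case: ha => -> H; lra.
Qed.

Lemma sum_delta {R : realFieldType} {V : finType} {S : {set V}} {k : V} (F : V -> R) :
  k \in S -> \sum_(j in S) (j == k)%:R * F j = F k.
Proof.
move=> kS; rewrite (bigD1 k) //= eqxx mul1r big1 ?addr0 // => j /andP[_ /negbTE ->].
by rewrite mul0r.
Qed.

Lemma Q_flip {R : realFieldType} {V : finType} (W : V -> V -> R) {S : {set V}}
  (c x : V -> R) {k : V} (d : R) :
  k \in S -> W k k = 0 -> (forall i, i \in S -> W i k = W k i) ->
  let Q := fun y : V -> R => \sum_(i in S) y i * (2 * c i + \sum_(j in S) W i j * y j) in
  Q (fun j => x j + (j == k)%:R * d) = Q x + d * (2 * c k + 2 * \sum_(j in S) W k j * x j).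
Proof.
move=> kS Wkk sym Q; rewrite /Q.
have E : forall i, \sum_(j in S) W i j * (x j + (j == k)%:R * d) =
     \sum_(j in S) W i j * x j + d * W i k.
  move=> i; rewrite -(sum_delta (fun j => d * W i j) kS) -big_split /=.
  apply: eq_bigr => j _; rewrite mulrDr; congr (_ + _); ring.
under eq_bigr do rewrite E mulrDl.
rewrite big_split /=.
have -> : \sum_(i in S) (i == k)%:R * d * (2 * c i + (\sum_(j in S) W i j * x j + d * W i k))
   = d * (2 * c k + (\sum_(j in S) W k j * x j)).
  rewrite (eq_bigr (fun i => (i == k)%:R * (d * (2 * c i + (\sum_(j in S) W i j * x j + d * W i k))))); last by move=> i _; rewrite mulrA.
  by rewrite sum_delta // Wkk mulr0 addr0.
have -> : \sum_(i in S) x i * (2 * c i + (\sum_(j in S) W i j * x j + d * W i k))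
  = \sum_(i in S) x i * (2 * c i + \sum_(j in S) W i j * x j) + d * \sum_(j in S) W k j * x j.
  rewrite mulr_sumr -big_split /=; apply: eq_bigr => i iS.
  by rewrite sym //; ring.
ring.
Qed.

Theorem corollary2 (R : realFieldType) (V : finType)
  (W : V -> V -> R) (h : V -> R) (Rs Ss : {set V}) (tau : V -> R) :
  (0 < #|V|)%N ->
  zero_diag W ->
  Rs :|: Ss = setT ->
  Rs :&: Ss = set0 ->
  struct_balanced_on W Rs ->
  undirected_on W Ss ->
  (forall i, i \in Rs -> pm1 (tau i)) ->
  (forall i j, i \in Rs -> j \in Rs -> 0 <= tau i * W i j * tau j) ->
  (forall i, i \in Rs -> wdeg W i Ss <= wdeg W i Rs + tau i * h i) ->
  exists x : V -> R, nash W h x /\ (forall i, i \in Rs -> x i = tau i).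
Proof.
move=> _ zd RuS RiS _ und taupm taupos deg.
have nR : forall j, (j \notin Rs) = (j \in Ss).
  move=> j; apply/idP/idP => [jR|jS].
    by move: (in_setT j); rewrite -RuS in_setU (negbTE jR).
  apply/negP => jR; have : j \in Rs :&: Ss by rewrite in_setI jR jS.
  by rewrite RiS in_set0.
have split : forall F : V -> R, \sum_j F j = \sum_(j in Rs) F j + \sum_(j in Ss) F j.
  move=> F; rewrite (bigID (fun j => j \in Rs)) /=; congr (_ + _).
  by apply: eq_bigl => j; rewrite nR.
pose c i := h i + \sum_(j in Rs) W i j * tau j.
pose xB (B : {set V}) j := if j \in Rs then tau j else if j \in B then 1 else -1 : R.
pose Q := fun y : V -> R => \sum_(i in Ss) y i * (2 * c i + \sum_(j in Ss) W i j * y j).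
pose B := [arg max_(B > set0) Q (xB B)]%O.
have Bmax : forall B', Q (xB B') <= Q (xB B).
  rewrite /B; case: arg_maxP => //= B0 _ H B'; exact: H.
have prof : forall B', profile (xB B').
  move=> B' j; rewrite /xB; case: ifP => jR; first exact: taupm.
  by case: ifP => _; [left|right].
exists (xB B); split; last by move=> i iR; rewrite /xB iR.
split; first exact: prof.
move=> i; apply: dev_ok; [exact: zd | exact: prof |].
rewrite split.
case: (boolP (i \in Rs)) => iR.
- have xi : xB B i = tau i by rewrite /xB iR.
  have e1 : \sum_(j in Rs) W i j * xB B j = \sum_(j in Rs) W i j * tau j.
    by apply: eq_bigr => j jR; rewrite /xB jR.
  rewrite xi e1.
  have A : tau i * \sum_(j in Rs) W i j * tau j = wdeg W i Rs.
    rewrite mulr_sumr /wdeg; apply: eq_bigr => j jR.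
    have := taupos i j iR jR; rewrite mulrA => p.
    rewrite -(ger0_norm p) !normrM.
    by case: (taupm i iR) => ->; case: (taupm j jR) => ->; rewrite ?normrN normr1 mul1r mulr1.
  have Bd : - wdeg W i Ss <= tau i * \sum_(j in Ss) W i j * xB B j.
    rewrite mulr_sumr /wdeg -sumrN; apply: ler_sum => j jS.
    have : `|tau i * (W i j * xB B j)| = `|W i j|.
      rewrite !normrM; case: (taupm i iR) => ->; case: (prof B j) => ->;
      by rewrite ?normrN normr1 mul1r mulr1.
    move=> <-; rewrite lerNl -normrN; exact: ler_norm.
  have D := deg i iR.
  rewrite !mulrDr A; lra.
- rewrite nR in iR.
  have e1 : \sum_(j in Rs) W i j * xB B j = \sum_(j in Rs) W i j * tau j.
    by apply: eq_bigr => j jR; rewrite /xB jR.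
  rewrite e1 addrA -/(c i).
  pose B' := if i \in B then B :\ i else i |: B.
  have ex : forall j, xB B' j = xB B j + (j == i)%:R * (- 2 * xB B i).
    move=> j; rewrite /xB /B'.
    case: (eqVneq j i) => [->|ji].
      rewrite -nR in iR; rewrite (negbTE iR).
      case: (boolP (i \in B)) => iB; rewrite ?setD11 ?setU11 /= mulr1n; ring.
    rewrite /= mulr0n mul0r addr0; case: ifP => // _.
    by case: (i \in B); rewrite ?in_setD1 ?in_setU1 (negbTE ji).
  have QB' : Q (xB B') = Q (fun j => xB B j + (j == i)%:R * (- 2 * xB B i)).
    by apply: eq_bigr => j _; rewrite !ex; congr (_ * (_ + _)); apply: eq_bigr => l _; rewrite ex.
  have := Bmax B'; rewrite QB' /Q (Q_flip W c (xB B) (-2 * xB B i) iR (zd i)); last first.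
    by move=> l lS; exact: und.
  move=> H.
  have : 0 <= xB B i * (2 * c i + 2 * \sum_(j in Ss) W i j * xB B j).
    rewrite -subr_ge0 in H; move: H.
    set Q0 := \sum_(i0 in Ss) _ .
    move=> H; have : 0 <= - (- 2 * xB B i * (2 * c i + 2 * \sum_(j in Ss) W i j * xB B j)).
      move: H; rewrite -mulrA; set z := _ * (_ + _); move=> H. lra.
    by rewrite -!mulrA mulNr opprK mulrA; lra.
  set s := \sum_(j in Ss) _; move=> H2.
  have : 0 <= 2 * (xB B i * (c i + s)) by move: H2; rewrite -(mulrDr 2) mulrCA.
  rewrite pmulr_rge0 //.
Qed.
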